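(* Consider the $(1,\lambda)$-CSA-ES with cumulation ($0<c<1$), any $\lambda\ge1$, $d_\sigma>0$, applied to $f(x)=[x]_1$ on $\mathbb{R}^n$. The real-valued Markov chain $([p_t]_1)_{t\in\mathbb{N}}$ is $\varphi$-irreducible and aperiodic, and every compact subset of $\mathbb{R}$ is a small set for it.
   Context: For $x\in\mathbb{R}^n$, $[x]_i$ denotes its $i$-th coordinate. The $(1,\lambda)$-CSA-ES with parameters $\lambda\ge1$, $0<c\le1$, $d_\sigma>0$, minimizing $f:\mathbb{R}^n\to\mathbb{R}$: start from $X_0\in\mathbb{R}^n$, $\sigma_0>0$, $p_0\sim\mathcal{N}(0,I_n)$; at iteration $t$ draw $\xi_{t,1},\ldots,\xi_{t,\lambda}$ i.i.d. $\sim\mathcal{N}(0,I_n)$ independent of the past, children $Y_{t,i}=X_t+\sigma_t\xi_{t,i}$; $X_{t+1}$ is the child with smallest $f$-value and $\xi^\star_t$ the corresponding $\xi_{t,i}$ (so $X_{t+1}=X_t+\sigma_t\xi^\star_t$); path $p_{t+1}=(1-c)p_t+\sqrt{c(2-c)}\,\xi^\star_t$; step-size $\sigma_{t+1}=\sigma_t\exp(\frac{c}{2d_\sigma}(\|p_{t+1}\|^2/n-1))$. On $f(x)=[x]_1$, $([p_t]_1)_t$ satisfies $[p_{t+1}]_1=(1-c)[p_t]_1+\sqrt{c(2-c)}[\xi^\star_t]_1$ with $([\xi^\star_t]_1)_t$ i.i.d., each distributed as the minimum of $\lambda$ i.i.d. standard normals, so it is a Markov chain on $\mathbb{R}$ with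 transition kernel $P$. Definitions: the chain is $\varphi$-irreducible if there is a nonzero measure $\varphi$ on the Borel sets such that for every Borel $A$ with $\varphi(A)>0$ and every starting point, $A$ is reached in finitely many steps with positive probability. A Borel set $C$ is small if there exist $m\ge1$ and a nonzero measure $\nu_m$ with $P^m(x,B)\ge\nu_m(B)$ for all $x\in C$ and Borel $B$. The chain is aperiodic if there is no $d\ge2$ and disjoint Borel sets $D_1,\ldots,D_d$ with $P(x,D_{i+1})=1$ for all $x\in D_i$ (indices mod $d$) and $(\bigcup_i D_i)^c$ being $\varphi$-null. *)

(* Defs.v *)
From HB Require Import structures.
From mathcomp Require Import all_boot all_order all_algebra.
From mathcomp Require Import all_classical all_reals all_analysis.

Import Order.TTheory GRing.Theory Num.Theory.
Import numFieldNormedType.Exports.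
Local Open Scope classical_set_scope.
Local Open Scope ring_scope.

(* Law of the minimum of k.+1 i.i.d. standard normal variables, built
   recursively as the pushforward, under (a,b) |-> min a b, of the product
   of a standard normal law with the law of the minimum of k of them. *)
Fixpoint minN01_law (R : realType) (k : nat) : set R -> \bar R :=
  match k with
  | 0 => normal_prob 0 1
  | k'.+1 => pushforward ((normal_prob 0 1) \x (minN01_law R k'))%E
               (fun p : R * R => Num.min p.1 p.2)
  end.

(* law of [xi*_t]_1 : minimum of lambda i.i.d. standard normals (lambda >= 1) *)
Definition xi_star_law (R : realType) (lambda : nat) : set R -> \bar R :=
  minN01_law R lambda.-1.

Definition csa_kernel (R : realType) (c : R) (lambda : nat) (x : R)
  : set R -> \bar R :=
  pushforward (xi_star_law R lambda)
    (fun z : R => (1 - c) * x + Num.sqrt (c * (2 - c)) * z).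

Fixpoint csa_kernel_n (R : realType) (c : R) (lambda : nat) (m : nat)
  (x : R) (B : set R) : \bar R :=
  match m with
  | 0 => (\1_B x)%:E
  | m'.+1 => (\int[csa_kernel R c lambda x]_y csa_kernel_n R c lambda m' y B)%E
  end.

Definition phi_irreducible (R : realType) (P : nat -> R -> set R -> \bar R)
  (phi : set R -> \bar R) : Prop :=
  phi setT != 0%E /\
  forall A : set R, measurable A -> (0 < phi A)%E ->
    forall x : R, exists m : nat, (0 < m)%N /\ (0 < P m x A)%E.

Definition small_set (R : realType) (P : nat -> R -> set R -> \bar R)
  (C : set R) : Prop :=
  measurable C /\
  exists (m : nat) (nu : {measure set R -> \bar R}),
    (0 < m)%N /\ nu setT != 0%E /\
    forall x, C x -> forall B : set R, measurable B -> (nu B <= P m x B)%E.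

Definition aperiodic (R : realType) (P : nat -> R -> set R -> \bar R)
  (phi : set R -> \bar R) : Prop :=
  ~ exists (d : nat) (D : nat -> set R),
      (2 <= d)%N /\
      (forall i, (i < d)%N -> measurable (D i)) /\
      (forall i j, (i < d)%N -> (j < d)%N -> i <> j -> D i `&` D j = set0) /\
      (forall i, (i < d)%N -> forall x, D i x -> P 1%N x (D ((i.+1) %% d)%N) = 1%E) /\
      phi (~` \bigcup_(i in [set i | (i < d)%N]) D i) = 0%E.

(* Main.v *)
Require Import Defs.
From HB Require Import structures.
From mathcomp Require Import all_boot all_order all_algebra.
From mathcomp Require Import all_classical all_reals all_analysis.
From mathcomp Require Import ring lra zify.
Import Order.TTheory GRing.Theory Num.Theory.
Import numFieldNormedType.Exports.
Import measurable_realfun.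
Local Open Scope classical_set_scope.
Local Open Scope ring_scope.

Definition NR (R : realType) : set R -> \bar R := normal_prob (0:R) 1.

Section NRsec.
Context (R : realType).
Let NR0 : NR R set0 = 0%E. Proof. exact: (measure0 (normal_prob (0:R) 1)). Qed.
Let NR_ge0 A : (0 <= NR R A)%E. Proof. exact: (measure_ge0 (normal_prob (0:R) 1)). Qed.
Let NR_sa : semi_sigma_additive (NR R).
Proof. exact: (@measure_semi_sigma_additive _ _ _ (normal_prob (0:R) 1)). Qed.
HB.instance Definition _ := isMeasure.Build _ R R (NR R) NR0 NR_ge0 NR_sa.
Let NR_T : NR R setT = 1%E. Proof. exact: (probability_setT (normal_prob (0:R) 1)). Qed.
HB.instance Definition _ := Measure_isProbability.Build _ R R (NR R) NR_T.
End NRsec.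

Definition minstep (R : realType) (mu : probability R R) : set R -> \bar R :=
  pushforward ((normal_prob (0:R) 1) \x mu)%E (fun p : R * R => Num.min p.1 p.2).

Lemma measurable_min2 (R : realType) :
  measurable_fun setT (fun p : (measurableTypeR R * R)%type => Num.min p.1 p.2 : R).
Proof. by apply: measurable_minr; [exact: measurable_fst|exact: measurable_snd]. Qed.

Arguments minstep {R}.

Section minstepsec.
Context (R : realType) (mu : probability R R).
Let P := ((normal_prob (0:R) 1) \x mu)%E.
Let mf := measurable_min2 R.
Let mpre (A : set R) : measurable A -> measurable ((fun p : (measurableTypeR R * R)%type => Num.min p.1 p.2 : R) @^-1` A).
Proof. by move=> mA; rewrite -[X in measurable X]setTI; apply: mf. Qed.
Let ms0 : minstep mu set0 = 0%E.
Proof. by rewrite /minstep /pushforward preimage_set0 measure0. Qed.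
Let ms_ge0 A : (0 <= minstep mu A)%E.
Proof. exact: measure_ge0. Qed.
Let ms_sa : semi_sigma_additive (minstep mu).
Proof.
move=> F mF tF mUF; rewrite /minstep /pushforward preimage_bigcup.
apply: (@measure_semi_sigma_additive _ _ _ P).
- by move=> n; apply: mpre.
- apply/trivIsetP => /= i j _ _ ij; rewrite -preimage_setI.
  by move/trivIsetP : tF => /(_ _ _ _ _ ij) ->//; rewrite preimage_set0.
- by rewrite -preimage_bigcup; apply: mpre.
Qed.
HB.instance Definition _ := isMeasure.Build _ R R (minstep mu) ms0 ms_ge0 ms_sa.
Let ms_T : minstep mu setT = 1%E.
Proof.
rewrite /minstep /pushforward preimage_setT -setXTT product_measure1E//.
transitivity (1%E * 1%E : \bar R)%E; last by rewrite mule1.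
congr (_ * _)%E; [exact: (probability_setT (normal_prob (0:R) 1))|exact: (probability_setT mu)].
Qed.
HB.instance Definition _ := Measure_isProbability.Build _ R R (minstep mu) ms_T.
End minstepsec.

Fixpoint minPr (R : realType) (k : nat) : probability R R :=
  match k with
  | 0 => NR R
  | k'.+1 => minstep (minPr R k')
  end.

Lemma minN01E (R : realType) k : minN01_law R k = minPr R k.
Proof. by elim: k => [//|k IH] /=; rewrite IH. Qed.

Definition aff (R : realType) (a s : R) := fun z : R => a + s * z.
Arguments aff {R}.

Lemma measurable_aff (R : realType) (a s : R) : measurable_fun setT (aff a s).
Proof. by apply: measurable_funD => //; apply: measurable_funM. Qed.

Definition kern (R : realType) (c : R) (lambda : nat) (x : R) : set R -> \bar R :=
  pushforward (minPr R lambda.-1) (aff ((1 - c) * x) (Num.sqrt (c * (2 - c)))).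
Arguments kern {R}.

Section kernsec.
Context (R : realType) (c : R) (lambda : nat) (x : R).
Let f := aff ((1 - c) * x) (Num.sqrt (c * (2 - c))).
Let mpre (A : set R) : measurable A -> measurable (f @^-1` A).
Proof. by move=> mA; rewrite -[X in measurable X]setTI; apply: measurable_aff. Qed.
Let k0 : kern c lambda x set0 = 0%E.
Proof. by rewrite /kern /pushforward preimage_set0 measure0. Qed.
Let k_ge0 A : (0 <= kern c lambda x A)%E.
Proof. by rewrite /kern /pushforward; exact: measure_ge0. Qed.
Let k_sa : semi_sigma_additive (kern c lambda x).
Proof.
move=> F mF tF mUF; rewrite /kern /pushforward preimage_bigcup.
apply: (@measure_semi_sigma_additive _ _ _ (minPr R lambda.-1)).
- by move=> n; apply: mpre.
- apply/trivIsetP => /= i j _ _ ij; rewrite -preimage_setI.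
  by move/trivIsetP : tF => /(_ _ _ _ _ ij) ->//; rewrite preimage_set0.
- by rewrite -preimage_bigcup; apply: mpre.
Qed.
HB.instance Definition _ := isMeasure.Build _ R R (kern c lambda x) k0 k_ge0 k_sa.
Let k_T : kern c lambda x setT = 1%E.
Proof. by rewrite /kern /pushforward preimage_setT probability_setT. Qed.
HB.instance Definition _ := Measure_isProbability.Build _ R R (kern c lambda x) k_T.
End kernsec.

Lemma csaE (R : realType) (c : R) lambda x : csa_kernel R c lambda x = kern c lambda x.
Proof. by rewrite /csa_kernel /xi_star_law minN01E. Qed.

Lemma csa1E (R : realType) (c : R) lambda x (B : set R) : measurable B ->
  csa_kernel_n R c lambda 1 x B = kern c lambda x B.
Proof.
move=> mB; rewrite /= csaE integral_indic // setIT.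
by [].
Qed.

Section lower.
Context (R : realType).
Notation leb := (@lebesgue_measure R).

Definition cN (K : R) := normal_peak (1:R) * expR (- K ^+ 2 / 2).

Lemma cN_gt0 K : 0 < cN K.
Proof. by rewrite mulr_gt0 ?expR_gt0// normal_peak_gt0// oner_neq0. Qed.

Lemma pdf_lb K x : `|x| <= K -> cN K <= normal_pdf 0 1 x.
Proof.
move=> xK; rewrite normal_pdfE ?oner_neq0// /cN ler_pM2l ?normal_peak_gt0 ?oner_neq0//.
rewrite /normal_fun ler_expR subr0 expr1n.
rewrite !mulNr lerN2 ler_pM2r ?invr_gt0//.
rewrite -[x ^+ 2]ger0_norm ?sqr_ge0// normrX.
by rewrite lerXn2r// ?nnegrE ?normr_ge0// (le_trans _ xK).
Qed.

Lemma lowN K (B : set R) : measurable B -> B `<=` [set x | `|x| <= K] ->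
  ((cN K)%:E * leb B <= NR R B)%E.
Proof.
move=> mB BK; rewrite /NR /normal_prob -integral_cst//.
apply: ge0_le_integral => //.
- by move=> x _; rewrite lee_fin ltW// cN_gt0.
- apply/measurable_EFinP; apply: measurable_funTS; exact: measurable_normal_pdf.
- by move=> x Bx; rewrite lee_fin pdf_lb// BK.
Qed.
End lower.
Arguments cN {R}.

Section minlow.
Context (R : realType).
Notation leb := (@lebesgue_measure R).

Lemma minPrS k (B : set R) : minPr R k.+1 B =
  ((normal_prob (0:R) 1 \x minPr R k) ((fun p : (measurableTypeR R * R)%type => Num.min p.1 p.2 : R) @^-1` B))%E.
Proof. by []. Qed.

Lemma itv_norm (K x : R) : x \in `[-K, K] -> `|x| <= K.
Proof. by rewrite in_itv /= -ler_norml. Qed.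

Lemma normal_tail (K : R) : 0 <= K -> ((cN (K + 1))%:E <= NR R `[K, +oo[%classic)%E.
Proof.
move=> K0.
have I1 : measurable (`[K, K + 1]%classic : set R) by [].
have h1 : (leb `[K, (K + 1)%R]%classic = 1%E).
  by rewrite lebesgue_measure_itv /= lte_fin ltrDl ltr01 -EFinB addrAC subrr add0r.
have h2 := @lowN R (K + 1) `[K, (K + 1)%R]%classic I1.
rewrite h1 mule1 in h2.
apply: (le_trans (h2 _)).
  move=> x /=; rewrite in_itv /= => /andP[Kx xK]; rewrite ger0_norm; last exact: le_trans Kx.
  by rewrite (le_trans xK)// lerDl.
apply: (@le_measure _ _ _ (NR R)); rewrite ?inE //.
move=> x /=; rewrite !in_itv /= andbT; by case/andP.
Qed.

Lemma tailpos k (K : R) : 0 <= K -> exists t : R, 0 < t /\ (t%:E <= minPr R k `[K, +oo[%classic)%E.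
Proof.
move=> K0; elim: k => [|k [t [t0 ht]]].
  by exists (cN (K + 1)); split; [exact: cN_gt0|exact: normal_tail].
exists (cN (K + 1) * t); split; first by rewrite mulr_gt0 ?cN_gt0.
rewrite minPrS.
apply: (@le_trans _ _ ((normal_prob (0:R) 1 \x minPr R k)%E (`[K, +oo[%classic `*` `[K, +oo[%classic))).
  rewrite product_measure1E// EFinM; apply: lee_pmul => //; first by rewrite lee_fin ltW// cN_gt0.
  by rewrite lee_fin ltW.
  exact: normal_tail.
apply: le_measure; rewrite ?inE//.
- apply: measurableX => //.
- rewrite -[X in measurable X]setTI; exact: measurable_min2.
- move=> [a b] /= [Ka Kb]; move: Ka Kb; rewrite !in_itv /= !andbT => Ka Kb.
  by rewrite le_min Ka Kb.
Qed.
Lemma lowMin k (K : R) : 0 <= K -> exists kap : R, 0 < kap /\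
  forall B : set R, measurable B ->
    ((kap%:E * leb (B `&` `[(- K)%R, K]%classic)) <= minPr R k B)%E.
Proof.
move=> K0.
have sub B : B `&` `[(- K)%R, K]%classic `<=` [set x | `|x| <= K].
  by move=> x [_ /= xI]; apply: itv_norm; rewrite inE.
case: k => [|k].
  exists (cN K); split; first exact: cN_gt0.
  move=> B mB.
  have mBI : measurable (B `&` `[(- K)%R, K]%classic) by exact: measurableI.
  apply: (le_trans (@lowN R K _ mBI (sub B))).
  apply: (@le_measure _ _ _ (NR R)); rewrite ?inE//.
have [t [t0 ht]] := tailpos k K K0.
exists (cN K * t); split; first by rewrite mulr_gt0 ?cN_gt0.
move=> B mB; rewrite minPrS.
have mBI : measurable (B `&` `[(- K)%R, K]%classic) by exact: measurableI.
apply: (@le_trans _ _ ((normal_prob (0:R) 1 \x minPr R k)%E ((B `&` `[(- K)%R, K]%classic) `*` `[K, +oo[%classic))).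
  rewrite product_measure1E// EFinM muleAC; apply: lee_pmul => //.
  - by rewrite mule_ge0// lee_fin ltW// cN_gt0.
  - by rewrite lee_fin ltW.
  - exact: (@lowN R K _ mBI (sub B)).
apply: le_measure; rewrite ?inE//.
- exact: measurableX.
- rewrite -[X in measurable X]setTI; exact: measurable_min2.
- move=> [a b] /= [[Ba aI] Kb]; move: aI Kb; rewrite !in_itv /= andbT => /andP[_ aK] Kb.
  by rewrite min_l// (le_trans aK).
Qed.
End minlow.

Definition lebaff (R : realType) (a s : R) : set (measurableTypeR R) -> \bar R :=
  pushforward (@lebesgue_measure R) (aff a s : measurableTypeR R -> measurableTypeR R).
Arguments lebaff {R}.

Section lebaffsec.
Context (R : realType) (a s : R).
Let f := aff a s : measurableTypeR R -> measurableTypeR R.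
Let mpre (A : set R) : measurable A -> measurable (f @^-1` A).
Proof. by move=> mA; rewrite -[X in measurable X]setTI; apply: measurable_aff. Qed.
Let k0 : lebaff a s set0 = 0%E.
Proof. by rewrite /lebaff /pushforward preimage_set0 measure0. Qed.
Let k_ge0 A : (0 <= lebaff a s A)%E.
Proof. by rewrite /lebaff /pushforward; exact: measure_ge0. Qed.
Let k_sa : semi_sigma_additive (lebaff a s).
Proof.
move=> F mF tF mUF; rewrite /lebaff /pushforward preimage_bigcup.
apply: (@measure_semi_sigma_additive _ _ _ (@lebesgue_measure R)).
- by move=> n; exact: (mpre (F n) (mF n)).
- apply/trivIsetP => /= i j _ _ ij; rewrite -preimage_setI.
  by move/trivIsetP : tF => /(_ _ _ _ _ ij) ->//; rewrite preimage_set0.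
- by rewrite -preimage_bigcup; exact: (mpre _ mUF).
Qed.
HB.instance Definition _ := isMeasure.Build _ _ R (lebaff a s) k0 k_ge0 k_sa.
End lebaffsec.

Lemma aff_preimage_oc (R : realType) (a s u v : R) : 0 < s ->
  aff a s @^-1` `]u, v] = `](u - a) / s, (v - a) / s]%classic.
Proof.
move=> s0; apply/seteqP; split => z /=; rewrite /aff !in_itv /=.
- move=> /andP[h1 h2]; apply/andP; split.
    by rewrite ltr_pdivrMr// ltrBlDl mulrC.
  by rewrite ler_pdivlMr// lerBrDl mulrC.
- move=> /andP[h1 h2]; apply/andP; split.
    by move: h1; rewrite ltr_pdivrMr// ltrBlDl mulrC.
  by move: h2; rewrite ler_pdivlMr// lerBrDl mulrC.
Qed.

Lemma leb_aff (R : realType) (a s : R) (A : set R) : 0 < s -> measurable A ->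
  lebesgue_measure (aff a s @^-1` A) = ((s^-1)%:E * lebesgue_measure A)%E.
Proof.
move=> s0 mA.
have key : lebesgue_measure A = mscale (NngNum (ltW s0)) (lebaff a s) A.
  apply: lebesgue_measure_unique => //= _ [[u v]] _ <-.
  rewrite /mscale /=.
  have -> : lebaff a s `]u, v] = lebesgue_measure (aff a s @^-1` `]u, v]) by [].
  rewrite aff_preimage_oc//.
  rewrite !lebesgue_measure_itv /= !lte_fin ltr_pM2r ?invr_gt0// ltrD2r.
  case: ifP => uv; last by rewrite mule0.
  rewrite -!EFinB -EFinM; congr EFin.
  by rewrite -mulrBl mulrC divfK ?gt_eqF//; ring.
rewrite key /mscale /= /lebaff /pushforward muleA -EFinM mulVf ?gt_eqF// mul1e.
by [].
Qed.

Section kernlow.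
Context (R : realType).
Notation leb := (@lebesgue_measure R).

Lemma kern_low (c : R) lambda (M : R) : 0 < c -> c < 2 -> 0 <= M ->
  exists kap : R, 0 < kap /\ forall x : R, `|x| <= M -> forall B : set R, measurable B ->
    (kap%:E * leb (B `&` `[(-1)%R, 1%R]%classic) <= kern c lambda x B)%E.
Proof.
move=> c0 c2 M0.
set s := Num.sqrt (c * (2 - c)).
have s0 : 0 < s by rewrite sqrtr_gt0 mulr_gt0// subr_gt0.
set K := (`|1 - c| * M + 1) / s.
have K0 : 0 <= K.
  by apply: divr_ge0; [apply: addr_ge0 => //; exact: mulr_ge0|exact: ltW].
have [k0 [k00 hk]] := lowMin R lambda.-1 K K0.
exists (k0 / s); split; first by rewrite divr_gt0.
move=> x xM B mB.
set a := (1 - c) * x.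
have -> : kern c lambda x B = minPr R lambda.-1 (aff a s @^-1` B) by [].
have mpre : measurable (aff a s @^-1` B).
  by rewrite -[X in measurable X]setTI; apply: measurable_aff.
have mI : measurable (B `&` `[(-1)%R, 1%R]%classic) by exact: measurableI.
apply: le_trans (hk _ mpre).
rewrite EFinM muleAC -muleA [X in (_ * X <= _)%E]muleC -(@leb_aff R a s _ s0 mI).
apply: lee_wpmul2l; first by rewrite lee_fin ltW.
apply: le_measure; rewrite ?inE//.
- by rewrite -[X in measurable X]setTI; apply: measurable_aff.
- exact: measurableI.
move=> z /= [Bz]; rewrite !in_itv /= => /andP[h1 h2]; split => //.
have hz : `|a + s * z| <= 1 by rewrite ler_norml h1 h2.
have ha : `|a| <= `|1 - c| * M by rewrite normrM ler_wpM2l.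
have hsz : s * `|z| <= `|1 - c| * M + 1.
  have -> : s * `|z| = `|(a + s * z) - a| by rewrite addrAC subrr add0r normrM gtr0_norm.
  by rewrite (le_trans (ler_normB _ _))// addrC lerD.
have zK : `|z| <= K by rewrite /K ler_pdivlMr// mulrC.
by move: zK; rewrite ler_norml => /andP[-> ->].
Qed.
End kernlow.

Definition phiR (R : realType) : set R -> \bar R :=
  fun B => lebesgue_measure (B `&` `[(-1)%R, 1%R]%classic).

Section phisec.
Context (R : realType).
Let mI : measurable (`[(-1)%R, 1%R]%classic : set (measurableTypeR R)) := measurable_itv _.
Let p0 : phiR R set0 = 0%E. Proof. exact: (measure0 (mrestr (@lebesgue_measure R) mI)). Qed.
Let p_ge0 A : (0 <= phiR R A)%E. Proof. exact: (measure_ge0 (mrestr (@lebesgue_measure R) mI)). Qed.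
Let p_sa : semi_sigma_additive (phiR R).
Proof. exact: (@measure_semi_sigma_additive _ _ _ (mrestr (@lebesgue_measure R) mI)). Qed.
HB.instance Definition _ := isMeasure.Build _ R R (phiR R) p0 p_ge0 p_sa.
End phisec.

Lemma phiRT (R : realType) : phiR R setT = 2%:E.
Proof.
rewrite /phiR setTI lebesgue_measure_itv /= lte_fin.
rewrite (_ : (-1 < 1) = true); last by rewrite gtrN.
by rewrite opprK -EFinD.
Qed.

Lemma ereal_helper (R : realType) (x : \bar R) : (0 < x)%E -> (x + 1 <= 1)%E -> False.
Proof.
case: x => [r| |] //=.
rewrite lte_fin => r0; rewrite -EFinD lee_fin => h; lra.
Qed.

Theorem lemma12 (R : realType) (n : nat) (lambda : nat) (c d_sigma : R) :
  (0 < n)%N -> (1 <= lambda)%N -> 0 < c -> c < 1 -> 0 < d_sigma ->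
  (exists phi : {measure set R -> \bar R},
      phi_irreducible R (csa_kernel_n R c lambda) phi /\
      aperiodic R (csa_kernel_n R c lambda) phi) /\
  (forall C : set R, compact C -> small_set R (csa_kernel_n R c lambda) C).
Proof.
move=> _ _ c0 c1 _.
have c2 : c < 2 by lra.
have lowx (x : R) : exists kap : R, 0 < kap /\ forall B : set R, measurable B ->
    (kap%:E * phiR R B <= csa_kernel_n R c lambda 1 x B)%E.
  have [kap [kap0 hk]] := kern_low R c lambda `|x| c0 c2 (normr_ge0 x).
  by exists kap; split => // B mB; rewrite csa1E//; exact: (hk x (lexx _) B mB).
split.
  exists (phiR R); split.
    split; first by change (phiR R setT != 0%E); rewrite phiRT.
    move=> A mA phiA x; exists 1%N; split => //.
    have [kap [kap0 hk]] := lowx x.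
    apply: (lt_le_trans _ (hk A mA)).
    by rewrite mule_gt0// lte_fin.
  move=> [d [D [d2 [mD [disj [cyc null]]]]]].
  have d0 : (0 < d)%N by apply: leq_trans d2.
  have [i [id phiDi]] : exists i, (i < d)%N /\ (0 < phiR R (D i))%E.
    apply: contrapT => hno.
    have h0 : forall i, (i < d)%N -> phiR R (D i) = 0%E.
      move=> i id; apply/eqP; rewrite eq_le measure_ge0 andbT leNgt.
      by apply/negP => h; apply: hno; exists i.
    set U := \bigcup_(i in [set i | (i < d)%N]) D i.
    have mU : measurable U by apply: bigcup_measurable => k /= kd; exact: mD.
    have hU : phiR R U = 0%E.
      rewrite (measure_bigcup (phiR R)) //=.
      - by apply: eseries0 => k _; rewrite inE /= => kd; exact: h0.
      - move=> k l /= kd ld [z [Dkz Dlz]]; apply: contrapT => kl.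
        have hz : (D k `&` D l) z by split.
        by rewrite (disj k l kd ld kl) in hz.
    have := phiRT R; rewrite -(setUv U) measureU//; last 2 first.
      exact: measurableC.
      exact: setICr.
    have null2 : phiR R (~` U) = 0%E := null.
    change (phiR R U + phiR R (~` U) = 2%:E -> False)%E.
    rewrite hU null2 add0e => h; have : (0:R) = 2 by case: h.
    lra.
  have [y Dy] : exists y, D i y.
    apply: contrapT => hne; move: phiDi.
    have -> : D i = set0 by apply/seteqP; split => // z Dz; apply: hne; exists z.
    by rewrite measure0 ltxx.
  set j := (i.+1 %% d)%N.
  have jd : (j < d)%N by rewrite ltn_pmod.
  have ij : i <> j.
    rewrite /j; case: (ltnP i.+1 d) => h.
      by rewrite modn_small// => /eqP; rewrite -[i.+1]addn1 -{1}[i]addn0 eqn_add2l.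
    have -> : i.+1 = d by apply/eqP; rewrite eqn_leq h id.
    rewrite modnn => i0; move: h; rewrite i0; move: d2 => /leq_trans h /h.
    by [].
  have hj := cyc i id y Dy; rewrite csa1E in hj; last exact: mD.
  have [kap [kap0 hk]] := lowx y.
  have hi := hk (D i) (mD i id); rewrite csa1E in hi; last exact: mD.
  have pos : (0 < kern c lambda y (D i))%E.
    by apply: (lt_le_trans _ hi); rewrite mule_gt0// lte_fin.
  apply: (@ereal_helper R _ pos).
  rewrite -{1}hj -measureU; [|exact: mD|exact: mD|exact: disj].
  by apply: (probability_le1 (kern c lambda y)); apply: measurableU; apply: mD.
move=> C cC; split; first exact: compact_measurable.
have [M [_ HM]] := compact_bounded cC.
set N := `|M| + 1.
have N0 : 0 <= N by rewrite /N addr_ge0.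
have hN : forall x, C x -> `|x| <= N.
  move=> x Cx; apply: (HM N) => //.
  by rewrite /N (le_lt_trans (ler_norm M))// ltrDl.
have [kap [kap0 hk]] := kern_low R c lambda N c0 c2 N0.
exists 1%N, (mscale (NngNum (ltW kap0)) (phiR R)); split => //; split.
  change (kap%:E * phiR R setT != 0)%E.
  by rewrite phiRT -EFinM eqe mulf_neq0 ?gt_eqF.
move=> x Cx B mB; rewrite csa1E//.
change (kap%:E * phiR R B <= kern c lambda x B)%E.
exact: (hk x (hN x Cx) B mB).
Qed.
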